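(* Let $\mu\in\mathbb{R}$, $\sigma^2>0$, and let $f(x)=\frac{1}{x\sqrt{2\pi\sigma^2}}\exp\left\{-\frac{(\log x-\mu)^2}{2\sigma^2}\right\}$ for $x\in(0,\infty)$ be the log-normal density. Then for every real $p\in(0,\infty)$, the number $\nu_p=\exp\left\{\mu+\frac{p-1}{2}\sigma^2\right\}$ satisfies $$\int_0^{\nu_p} y^{p-1} f(\nu_p-y)\,dy=\int_0^{\infty} y^{p-1} f(\nu_p+y)\,dy.$$ *)

(* Defs.v *)
From HB Require Import structures.
From mathcomp Require Import all_boot all_order all_algebra.
From mathcomp Require Import all_classical all_reals all_analysis.
Set Implicit Arguments. Unset Strict Implicit. Unset Printing Implicit Defensive.
Import Order.TTheory GRing.Theory Num.Theory.
Local Open Scope ring_scope.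

(* Log-normal density with parameters mu and s2 = sigma^2, defined on (0,oo);
   extended by 0 outside (0,oo) (only values on (0,oo) are used). *)
Definition lognormal_pdf (R : realType) (mu s2 : R) (x : R) : R :=
  if 0 < x then
    (x * Num.sqrt (2 * pi * s2))^-1 * expR (- ((ln x - mu) ^+ 2) / (2 * s2))
  else 0.

(* Main.v *)
Require Import Defs.
From HB Require Import structures.
From mathcomp Require Import all_boot all_order all_algebra.
From mathcomp Require Import all_classical all_reals all_analysis.
From mathcomp Require Import ring lra.
From mathcomp Require Import measurable_realfun.
Import Order.TTheory GRing.Theory Num.Theory.
Import numFieldNormedType.Exports.
Local Open Scope ring_scope.
Local Open Scope classical_set_scope.

Section helpers.
Context {R : realType}.

Lemma powR_cont (r x : R) : 0 < x -> y `^ r @[y --> x] --> x `^ r.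
Proof.
move=> x0.
have := @derivable_powR R 1 r x; rewrite in_itv /= x0 => /(_ isT).
by move/derivable1_diffP/differentiable_continuous.
Qed.

Lemma lognormal_cont (mu s2 x : R) : 0 < s2 -> 0 < x ->
  lognormal_pdf mu s2 y @[y --> x] --> lognormal_pdf mu s2 x.
Proof.
move=> s0 x0.
pose g := fun y : R => (y * Num.sqrt (2 * pi * s2))^-1 *
   expR (- ((ln y - mu) ^+ 2) / (2 * s2)).
have eqg : {near x, g =1 lognormal_pdf mu s2}.
  near=> y; rewrite /lognormal_pdf ifT //.
  near: y; exact: lt_nbhsr.
have -> : lognormal_pdf mu s2 x = g x by rewrite /lognormal_pdf ifT.
apply: cvg_trans (near_eq_cvg eqg) _.
rewrite /g; apply: cvgM.
  apply: cvgV.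
    by rewrite mulf_neq0 // ?gt_eqF // sqrtr_gt0 !mulr_gt0 // pi_gt0.
  apply: cvgMl; exact: cvg_id.
apply: continuous_comp => /=; last exact: continuous_expR.
apply: cvgMl; apply: cvgN; by rewrite expr2; apply: cvgM; (apply: cvgB; [exact: continuous_ln | exact: cvg_cst]).
Unshelve. all: by end_near.
Qed.

Definition phi (nu y : R) := nu * y / (nu + y).

Lemma phi_derive (nu y : R) : 0 < nu -> 0 < y ->
  is_derive y (1:R) (phi nu) (nu ^+ 2 / (nu + y) ^+ 2).
Proof.
move=> nu0 y0.
have h1 : is_derive y (1:R) (fun z : R => nu + z) 1.
  have := @is_deriveD R R R (cst nu) id y 1 0 1 (is_derive_cst _ _ _) (is_derive_id _ _).
  by rewrite add0r.
have nz : nu + y != 0 by rewrite gt_eqF // addr_gt0.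
have h2 := is_deriveV nz h1.
have h3 : is_derive y (1:R) (fun z : R => nu * z) nu.
  have := @is_deriveZ R R R id nu y 1 1 (is_derive_id _ _).
  by rewrite /GRing.scale /= mulr1.
have h4 := is_deriveM h3 h2.
apply: is_derive_eq h4 _.
rewrite /GRing.scale /=. field. by rewrite nz.
Qed.

Lemma key (mu s2 p nu y : R) : 0 < s2 -> 0 < y ->
  nu = expR (mu + (p - 1) / 2 * s2) ->
  (phi nu y) `^ (p - 1) * lognormal_pdf mu s2 (nu - phi nu y) * (nu ^+ 2 / (nu + y) ^+ 2)
  = y `^ (p - 1) * lognormal_pdf mu s2 (nu + y).
Proof.
move=> s0 y0 nuE.
have nu0 : 0 < nu by rewrite nuE expR_gt0.
have u0 : 0 < nu + y by rewrite addr_gt0.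
have phiE : nu - phi nu y = nu ^+ 2 / (nu + y).
  rewrite /phi; field; by rewrite gt_eqF.
have phi0 : 0 < phi nu y by rewrite /phi divr_gt0 // mulr_gt0.
have v0 : 0 < nu ^+ 2 / (nu + y) by rewrite divr_gt0 // exprn_gt0.
rewrite phiE /lognormal_pdf ifT // ifT // /powR !gt_eqF //.
have lnphi : ln (phi nu y) = ln nu + ln y - ln (nu + y).
  by rewrite /phi ln_div ?posrE ?mulr_gt0 // lnM ?posrE.
have lnv : ln (nu ^+ 2 / (nu + y)) = ln nu *+ 2 - ln (nu + y).
  by rewrite ln_div ?posrE ?exprn_gt0 // lnXn.
have lnnu : ln nu = mu + (p - 1) / 2 * s2 by rewrite nuE expRK.
rewrite lnphi lnv.
set c := Num.sqrt (2 * pi * s2).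
have c0 : 0 < c by rewrite sqrtr_gt0 !mulr_gt0 // pi_gt0.
set L := ln nu. set ly := ln y. set lu := ln (nu + y).
have E : expR ((p - 1) * (L + ly - lu)) * expR (- (L *+ 2 - lu - mu) ^+ 2 / (2 * s2))
   = expR ((p - 1) * ly) * expR (- (lu - mu) ^+ 2 / (2 * s2)).
  rewrite -!expRD; congr expR; rewrite /L lnnu. field. by rewrite gt_eqF.
have F : (nu ^+ 2 / (nu + y) * c)^-1 * (nu ^+ 2 / (nu + y) ^+ 2) = ((nu + y) * c)^-1.
  field. by rewrite !gt_eqF.
transitivity ((expR ((p - 1) * (L + ly - lu)) * expR (- (L *+ 2 - lu - mu) ^+ 2 / (2 * s2))) *
  ((nu ^+ 2 / (nu + y) * c)^-1 * (nu ^+ 2 / (nu + y) ^+ 2))); first by ring.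
rewrite E F; ring.
Qed.

Lemma phiE (nu y : R) : 0 < nu -> 0 < y -> phi nu y = nu - nu ^+ 2 / (nu + y).
Proof. move=> nu0 y0; rewrite /phi; field; by rewrite gt_eqF // addr_gt0. Qed.

Lemma phi_lt (nu y z : R) : 0 < nu -> 0 < y -> y < z -> phi nu y < phi nu z.
Proof.
move=> nu0 y0 yz; have z0 : 0 < z by apply: lt_trans yz.
rewrite !phiE // ltrD2l ltrN2 ltr_pM2l ?exprn_gt0 //.
by rewrite ltf_pV2 ?posrE ?addr_gt0 // ltrD2l.
Qed.

Lemma phi_le (nu y z : R) : 0 < nu -> 0 < y -> y <= z -> phi nu y <= phi nu z.
Proof.
move=> nu0 y0; rewrite le_eqVlt => /predU1P[->//|yz].
exact/ltW/phi_lt.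
Qed.

Lemma phi_gt0 (nu y : R) : 0 < nu -> 0 < y -> 0 < phi nu y.
Proof. by move=> nu0 y0; rewrite /phi divr_gt0 ?mulr_gt0 ?addr_gt0. Qed.

Lemma phi_ltnu (nu y : R) : 0 < nu -> 0 < y -> phi nu y < nu.
Proof.
move=> nu0 y0; rewrite phiE // ltrBlDr ltrDl divr_gt0 ?exprn_gt0 ?addr_gt0 //.
Qed.

Lemma phi_inv (nu x : R) : 0 < x < nu -> phi nu (nu * x / (nu - x)) = x.
Proof.
case/andP=> x0 xnu; have nu0 : 0 < nu by apply: lt_trans xnu.
have nx : nu - x != 0 by rewrite gt_eqF // subr_gt0.
rewrite /phi.
have -> : nu + nu * x / (nu - x) = nu ^+ 2 / (nu - x) by field.
field; rewrite nx gt_eqF ?exprn_gt0 //.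
Qed.

Lemma phi_d1 (nu z : R) : 0 < nu -> 0 < z -> (phi nu)^`() z = nu ^+ 2 / (nu + z) ^+ 2.
Proof. by move=> nu0 z0; rewrite derive1E; apply: derive_val; exact: phi_derive. Qed.

Lemma phi_derivable (nu z : R) : 0 < nu -> 0 < z -> derivable (phi nu) z 1.
Proof. by move=> nu0 z0; have [] := @phi_derive nu z nu0 z0. Qed.

Lemma phi_cont (nu z : R) : 0 < nu -> 0 < z -> phi nu w @[w --> z] --> phi nu z.
Proof.
by move=> nu0 z0; apply/differentiable_continuous/derivable1_diffP/phi_derivable.
Qed.

Lemma phi_d1_cont (nu z : R) : 0 < nu -> 0 < z ->
  (phi nu)^`() w @[w --> z] --> (phi nu)^`() z.
Proof.
move=> nu0 z0.
have eq : {near z, (fun w => nu ^+ 2 / (nu + w) ^+ 2) =1 (phi nu)^`()}.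
  near=> w; rewrite phi_d1 //; near: w; exact: lt_nbhsr.
apply: cvg_trans (near_eq_cvg eq) _.
rewrite phi_d1 //; apply: cvgMr; apply: cvgV.
  by rewrite gt_eqF // exprn_gt0 // addr_gt0.
by rewrite expr2; apply: cvgM; (apply: cvgD; [exact: cvg_cst | exact: cvg_id]).
Unshelve. all: by end_near.
Qed.

Lemma lognormal_ge0 (mu s2 x : R) : 0 <= lognormal_pdf mu s2 x.
Proof.
rewrite /lognormal_pdf; case: ifP => // x0.
by rewrite mulr_ge0 ?expR_ge0 // invr_ge0 mulr_ge0 ?sqrtr_ge0 // ltW.
Qed.

Lemma gL_cont (mu s2 p nu x : R) : 0 < s2 -> 0 < x < nu ->
  x `^ (p - 1) * lognormal_pdf mu s2 (nu - x) @[x --> x] -->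
  x `^ (p - 1) * lognormal_pdf mu s2 (nu - x).
Proof.
move=> s0 /andP[x0 xnu]; apply: cvgM; first exact: powR_cont.
apply: (@continuous_comp _ _ _ (fun y => nu - y) (lognormal_pdf mu s2)).
  by apply: cvgB; [exact: cvg_cst | exact: cvg_id].
by apply: lognormal_cont => //; rewrite subr_gt0.
Qed.

Lemma gR_cont (mu s2 p nu x : R) : 0 < s2 -> 0 < nu -> 0 < x ->
  x `^ (p - 1) * lognormal_pdf mu s2 (nu + x) @[x --> x] -->
  x `^ (p - 1) * lognormal_pdf mu s2 (nu + x).
Proof.
move=> s0 nu0 x0; apply: cvgM; first exact: powR_cont.
apply: (@continuous_comp _ _ _ (fun y => nu + y) (lognormal_pdf mu s2)).
  by apply: cvgD; [exact: cvg_cst | exact: cvg_id].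
by apply: lognormal_cont => //; rewrite addr_gt0.
Qed.
End helpers.

Theorem theorem2 (R : realType) (mu s2 p : R) (hs2 : 0 < s2) (hp : 0 < p) :
  let nu := expR (mu + (p - 1) / 2 * s2) in
  (\int[lebesgue_measure]_(y in `]0%R, nu[%classic)
      (y `^ (p - 1) * lognormal_pdf mu s2 (nu - y))%:E
   = \int[lebesgue_measure]_(y in `]0%R, +oo[%classic)
      (y `^ (p - 1) * lognormal_pdf mu s2 (nu + y))%:E)%E.
Proof.
move=> nu.
have nu0 : 0 < nu by exact: expR_gt0.
pose gL := fun y : R => y `^ (p - 1) * lognormal_pdf mu s2 (nu - y).
pose gR := fun y : R => y `^ (p - 1) * lognormal_pdf mu s2 (nu + y).
pose a := fun n : nat => (n.+1%:R : R)^-1.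
pose b := fun n : nat => (n.+1%:R : R).
have a0 n : 0 < a n by rewrite /a invr_gt0 ltr0n.
have ab n : a n <= b n.
  apply: (@le_trans _ _ 1); last by rewrite /b ler1n.
  by rewrite /a invf_le1 ?ltr0n // ler1n.
have anon n m : (n <= m)%N -> a m <= a n.
  by move=> nm; rewrite /a lef_pV2 ?posrE ?ltr0n // ler_nat ltnS.
have bnon n m : (n <= m)%N -> b n <= b m.
  by move=> nm; rewrite /b ler_nat ltnS.
pose B := fun n => `[a n, b n]%classic : set R.
pose A := fun n => `[phi nu (a n), phi nu (b n)]%classic : set R.
have UB : \bigcup_n B n = `]0, +oo[%classic.
  apply/seteqP; split => [y [n _] | y /=].
    rewrite /B /= !in_itv /= => /andP[ay _]; rewrite andbT; exact: lt_le_trans (a0 n) ay.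
  rewrite in_itv /= andbT => y0.
  exists (Num.truncn (y + y^-1)) => //; rewrite /B /= in_itv /= /a /b; apply/andP; split.
    rewrite -(invrK y) lef_pV2 ?posrE ?ltr0n ?invr_gt0 //.
    apply: ltW; apply: le_lt_trans (truncnS_gt _).
    by rewrite invrK lerDr ltW.
  apply: ltW; apply: le_lt_trans (truncnS_gt _).
  by rewrite lerDl ltW // invr_gt0.
have UA : \bigcup_n A n = `]0, nu[%classic.
  apply/seteqP; split => [x [n _] | x /=].
    rewrite /A /= !in_itv /= => /andP[h1 h2]; apply/andP; split.
      exact: lt_le_trans (phi_gt0 _ _ nu0 (a0 n)) h1.
    exact: le_lt_trans h2 (phi_ltnu _ _ nu0 (lt_le_trans (a0 n) (ab n))).
  rewrite in_itv /= => /andP[x0 xnu].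
  have y0 : 0 < nu * x / (nu - x) by rewrite divr_gt0 ?mulr_gt0 ?subr_gt0.
  have : `]0, +oo[%classic (nu * x / (nu - x)) by rewrite /= in_itv /= andbT.
  rewrite -UB => -[n _]; rewrite /B /= in_itv /= => /andP[h1 h2].
  exists n => //; rewrite /A /= in_itv /=.
  have E := @phi_inv _ nu x; rewrite x0 xnu in E; rewrite -E //.
  by rewrite !phi_le // (lt_le_trans (a0 n)).
have ndB : {homo B : n m / (n <= m)%N >-> (n <= m)%O}.
  move=> n m nm; rewrite subsetEset => y; rewrite /B /= !in_itv /= => /andP[h1 h2].
  by rewrite (le_trans (anon _ _ nm) h1) (le_trans h2 (bnon _ _ nm)).
have ndA : {homo A : n m / (n <= m)%N >-> (n <= m)%O}.
  move=> n m nm; rewrite subsetEset => y; rewrite /A /= !in_itv /= => /andP[h1 h2].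
  rewrite (le_trans _ h1) ?(le_trans h2) //.
    by apply: phi_le; [by [] | exact: lt_le_trans (a0 n) (ab n) | exact: bnon].
  by apply: phi_le; [by [] | exact: a0 | exact: anon].
have mgL : measurable_fun `]0, nu[%classic gL.
  apply: open_continuous_measurable_fun; first exact: interval_open.
  move=> x; rewrite inE /= in_itv /= => hx; exact: gL_cont.
have mgR : measurable_fun (`]0, +oo[%classic : set R) gR.
  apply: open_continuous_measurable_fun; first exact: interval_open.
  move=> x; rewrite inE /= in_itv /= andbT => hx; exact: gR_cont.
have AS n : A n `<=` `]0, nu[%classic.
  by rewrite -UA; exact: bigcup_sup.
have BS n : B n `<=` `]0, +oo[%classic.
  by rewrite -UB; exact: bigcup_sup.
have cA := @ge0_nondecreasing_set_cvg_integral _ (measurableTypeR R) R A (fun y => (gL y)%:E)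
  (@lebesgue_measure R) ndA (fun n => measurable_itv _)
  (fun n => ltac:(by apply/measurable_EFinP; exact: (measurable_funS _ (AS n) mgL)))
  (fun n y _ => ltac:(by rewrite lee_fin mulr_ge0 ?powR_ge0 ?lognormal_ge0)).
have cB := @ge0_nondecreasing_set_cvg_integral _ (measurableTypeR R) R B (fun y => (gR y)%:E)
  (@lebesgue_measure R) ndB (fun n => measurable_itv _)
  (fun n => ltac:(by apply/measurable_EFinP; exact: (measurable_funS _ (BS n) mgR)))
  (fun n y _ => ltac:(by rewrite lee_fin mulr_ge0 ?powR_ge0 ?lognormal_ge0)).
rewrite UA in cA; rewrite UB in cB.
have eqn n : (\int[lebesgue_measure]_(x in A n) (gL x)%:E =
              \int[lebesgue_measure]_(x in B n) (gR x)%:E)%E.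
  rewrite /A /B integration_by_substitution_increasing //.
  - apply: eq_integral => y; rewrite inE /= in_itv /= => /andP[ay _].
    have y0 := lt_le_trans (a0 n) ay.
    congr EFin; change (gL (phi nu y) * (phi nu)^`()%classic y = gR y).
    rewrite phi_d1 // /gL /gR.
    exact: key.
  - move=> y z; rewrite !in_itv /= => /andP[ay _] _ yz.
    exact: phi_lt (lt_le_trans (a0 n) ay) yz.
  - move=> z; rewrite in_itv /= => /andP[az _].
    exact: phi_d1_cont (lt_trans (a0 n) az).
  - apply/cvg_ex; eexists; apply: cvg_at_right_filter.
    exact: phi_d1_cont (a0 n).
  - apply/cvg_ex; eexists; apply: cvg_at_left_filter.
    exact: phi_d1_cont (lt_le_trans (a0 n) (ab n)).
  - split.
    + move=> z; rewrite in_itv /= => /andP[az _].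
      exact: phi_derivable (lt_trans (a0 n) az).
    + apply: cvg_at_right_filter; exact: phi_cont (a0 n).
    + apply: cvg_at_left_filter; exact: phi_cont (lt_le_trans (a0 n) (ab n)).
  - apply: continuous_in_subspaceT => x; rewrite inE /= in_itv /= => /andP[h1 h2].
    apply: gL_cont => //; apply/andP; split.
      exact: lt_le_trans (phi_gt0 _ _ nu0 (a0 n)) h1.
    exact: le_lt_trans h2 (phi_ltnu _ _ nu0 (lt_le_trans (a0 n) (ab n))).
have E : (fun i => \int[lebesgue_measure]_(x in A i) (gL x)%:E)%E =
          (fun i => \int[lebesgue_measure]_(x in B i) (gR x)%:E)%E.
  by apply/funext => n; exact: eqn.
rewrite E in cA.
exact: (cvg_unique _ cA cB).
Qed.
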